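(* Let $r$ be a positive integer and let $M\in\{0,1\}^{n\times n}$ with $\operatorname{rank}(M)\leq r$. Let $d=|M|/n$ and let $\Delta$ be the maximum number of $1$ entries in a row or column of $M$. If $d\leq n/2$ and $\Delta\leq 1.1d$, then $$\operatorname{pdisc}(M)\geq\frac{d^{1/2}n^{3/2}}{7\sqrt{r}}.$$
   Context: $|M|$ is the number of $1$ entries of $M$; let $N=2n$ and $p=|M|/n^2$. The symmetrization of $M$ is the symmetric matrix $A\in\mathbb{R}^{N\times N}$ with $A_{i,j+n}=A_{j+n,i}=M_{i,j}$ and all other entries $0$. $L\in\mathbb{R}^{N\times N}$ is the adjacency matrix of the complete bipartite graph with parts $[n]$ and $[n+1,N]$. For $X\in\mathbb{R}^{N\times N}$, $\operatorname{disc}(X)=\langle X,A\rangle-p\langle X,L\rangle$ (entrywise inner product), and $\operatorname{pdisc}(M)=\max\{\operatorname{disc}(X): X\text{ symmetric positive semidefinite},\ X_{i,i}\leq1\ \forall i\}$. *)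

(* Defs.v *)
From HB Require Import structures.
From mathcomp Require Import all_boot all_order all_algebra.
From mathcomp Require Import boolp classical_sets reals.
Set Implicit Arguments. Unset Strict Implicit. Unset Printing Implicit Defensive.
Import Order.TTheory GRing.Theory Num.Theory.
Local Open Scope ring_scope.

Section Defs.
Variable R : realType.

Definition is01 (n : nat) (M : 'M[R]_n) : Prop :=
  forall i j, M i j = 0 \/ M i j = 1.

Definition nnz (n : nat) (M : 'M[R]_n) : nat :=
  #|[set ij : 'I_n * 'I_n | M ij.1 ij.2 == 1]|.

Definition maxdeg (n : nat) (M : 'M[R]_n) : nat :=
  maxn (\max_(i < n) #|[set j : 'I_n | M i j == 1%R]|)
       (\max_(j < n) #|[set i : 'I_n | M i j == 1%R]|).

Definition symmetrization (n : nat) (M : 'M[R]_n) : 'M[R]_(n + n) :=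
  block_mx 0 M M^T 0.

Definition Kbip (n : nat) : 'M[R]_(n + n) :=
  block_mx 0 (const_mx 1) (const_mx 1) 0.

Definition inner (m : nat) (X Y : 'M[R]_m) : R :=
  \sum_(i < m) \sum_(j < m) X i j * Y i j.

Definition psd (m : nat) (X : 'M[R]_m) : Prop :=
  X^T = X /\ forall v : 'rV[R]_m, 0 <= (v *m X *m v^T) 0 0.

Definition disc (n : nat) (M : 'M[R]_n) (X : 'M[R]_(n + n)) : R :=
  inner X (symmetrization M)
  - ((nnz M)%:R / (n%:R ^+ 2)) * inner X (Kbip n).

Definition pdisc (n : nat) (M : 'M[R]_n) : R :=
  sup [set x : R | exists X : 'M[R]_(n + n),
         [/\ psd X, (forall i, X i i <= 1) & x = disc M X]].

End Defs.

(* Main.v *)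
Require Import Defs.
From HB Require Import structures.
From mathcomp Require Import all_boot all_order all_algebra.
From mathcomp Require Import boolp classical_sets reals.
From mathcomp Require Import ring lra.
Set Implicit Arguments. Unset Strict Implicit. Unset Printing Implicit Defensive.
Import Order.TTheory GRing.Theory Num.Theory.
Local Open Scope ring_scope.

Section Helpers.
Variable R : realType.

Lemma qf_entry m (P : 'M[R]_m) a b :
  ((delta_mx 0 a : 'rV[R]_m) *m P *m (delta_mx 0 b : 'rV[R]_m)^T) 0 0 = P a b.
Proof. by rewrite -rowE trmx_delta -colE !mxE. Qed.

Lemma e00D (A B : 'M[R]_1) : (A + B) 0 0 = A 0 0 + B 0 0.
Proof. by rewrite mxE. Qed.
Lemma e00Z (A : 'M[R]_1) x : (x *: A) 0 0 = x * A 0 0.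
Proof. by rewrite mxE. Qed.

Lemma qf2 m (P : 'M[R]_m) a b x y :
  let v := x *: delta_mx 0 a + y *: delta_mx 0 b : 'rV[R]_m in
  (v *m P *m v^T) 0 0 = x * x * P a a + x * y * (P a b + P b a) + y * y * P b b.
Proof.
move=> v; rewrite /v linearD /= !linearZ /= !mulmxDl !mulmxDr.
rewrite -!scalemxAl -!scalemxAr.
by rewrite !e00D !e00Z !qf_entry; ring.
Qed.

Lemma psd_diag m (P : 'M[R]_m) a : psd P -> 0 <= P a a.
Proof. by case=> _ H; have := H (delta_mx 0 a); rewrite qf_entry. Qed.

Lemma psd_cs m (P : 'M[R]_m) a b : psd P -> P a b ^+ 2 <= P a a * P b b.
Proof.
move=> hP; have [hs hq] := hP.
have Pba : P b a = P a b by have := congr1 (fun A : 'M[R]_m => A a b) hs; rewrite mxE.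
have H x y : 0 <= x * x * P a a + x * y * (2 * P a b) + y * y * P b b.
  have := hq (x *: delta_mx 0 a + y *: delta_mx 0 b).
  by rewrite qf2 Pba -mulr2n mulr_natl.
have ga := psd_diag a hP; have gb := psd_diag b hP.
have [gb0|gbpos] := eqVneq (P b b) 0.
  rewrite gb0 mulr0.
  have [->|nz] := eqVneq (P a b) 0; first by rewrite expr0n.
  have := H 1 (- (P a a + 1) / (2 * P a b)).
  rewrite gb0 mulr0 addr0 mul1r => h.
  have e : - (P a a + 1) / (2 * P a b) * (2 * P a b) = - (P a a + 1).
    by rewrite mulfVK // mulf_neq0 // pnatr_eq0.
  exfalso; move: h; rewrite !mul1r e; lra.
have gp : 0 < P b b by rewrite lt_def gbpos gb.
have := H (P b b) (- P a b).
move=> h; rewrite -(@ler_pM2l _ (P b b)) //.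
nra.
Qed.

Lemma psd_congr m k (S : 'M[R]_k) (A : 'M[R]_(m, k)) :
  psd S -> psd (A *m S *m A^T).
Proof.
case=> hs hq; split.
  by rewrite !trmx_mul trmxK hs mulmxA.
move=> v; have := hq (v *m A).
by rewrite trmx_mul !mulmxA.
Qed.

Lemma psd_gram k m (Q : 'M[R]_(k, m)) : psd (Q *m Q^T).
Proof.
split; first by rewrite trmx_mul trmxK.
move=> v; rewrite -mulmxA -[_ *m v^T]mulmxA mulmxA -trmx_mul.
set u := v *m Q; clearbody u.
rewrite mxE; apply: sumr_ge0 => i _; rewrite mxE -expr2; exact: sqr_ge0.
Qed.

Lemma psd_inv k (G : 'M[R]_k) : psd G -> G \in unitmx -> psd (invmx G).
Proof.
case=> hs hq hu; split; first by rewrite trmx_inv hs.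
move=> v; have := hq (v *m invmx G).
rewrite trmx_mul trmx_inv hs -!mulmxA (mulmxA G) mulmxV // mul1mx.
by rewrite !mulmxA.
Qed.


Lemma disc_eq n (M : 'M[R]_n) X :
  disc M X = \sum_a \sum_b X a b * (symmetrization M a b
     - (nnz M)%:R / (n%:R ^+ 2) * Kbip R n a b).
Proof.
rewrite /disc /inner mulr_sumr -sumrB; apply: eq_bigr => a _.
rewrite mulr_sumr -sumrB; apply: eq_bigr => b _; ring.
Qed.

Lemma psd_entry_le1 m (X : 'M[R]_m) a b :
  psd X -> (forall i, X i i <= 1) -> `|X a b| <= 1.
Proof.
move=> hP h1; have := psd_cs a b hP.
have := psd_diag a hP; have := psd_diag b hP; have := h1 a; have := h1 b.
move=> h1b h1a h0b h0a hcs.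
have hx : X a b ^+ 2 <= 1 by apply: (le_trans hcs); nra.
rewrite -(expr_le1 (n:=2)) //= real_normK ?num_real //.
Qed.

Lemma disc_le_pdisc n (M : 'M[R]_n) X :
  psd X -> (forall i, X i i <= 1) -> disc M X <= pdisc M.
Proof.
move=> hP h1; apply: ub_le_sup; last by exists X.
exists (\sum_a \sum_b `|symmetrization M a b
     - (nnz M)%:R / (n%:R ^+ 2) * Kbip R n a b|).
move=> y [Y [hY hY1 ->]]; rewrite disc_eq.
apply: ler_sum => a _; apply: ler_sum => b _.
apply: (le_trans (ler_norm _)); rewrite normrM.
apply: ler_piMl => //; exact: psd_entry_le1.
Qed.


Lemma inner_sym n (X : 'M[R]_(n + n)) (C : 'M[R]_n) :
  (forall i j, X (rshift n j) (lshift n i) = X (lshift n i) (rshift n j)) ->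
  inner X (block_mx 0 C C^T 0)
    = 2 * \sum_i \sum_j X (lshift n i) (rshift n j) * C i j.
Proof.
move=> hs; rewrite /inner big_split_ord /=.
under eq_bigr do rewrite big_split_ord /=.
under [X in _ + X = _]eq_bigr do rewrite big_split_ord /=.
rewrite !big_split /=.
set Bm := block_mx 0 C C^T 0.
have e1 : \sum_(i<n) \sum_(j<n) X (lshift n i) (lshift n j) * Bm (lshift n i) (lshift n j) = 0.
  by apply: big1 => i _; apply: big1 => j _; rewrite block_mxEul mxE mulr0.
have e4 : \sum_(i<n) \sum_(j<n) X (rshift n i) (rshift n j) * Bm (rshift n i) (rshift n j) = 0.
  by apply: big1 => i _; apply: big1 => j _; rewrite block_mxEdr mxE mulr0.
have e2 : \sum_(i<n) \sum_(j<n) X (lshift n i) (rshift n j) * Bm (lshift n i) (rshift n j)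
   = \sum_i \sum_j X (lshift n i) (rshift n j) * C i j.
  by apply: eq_bigr => i _; apply: eq_bigr => j _; rewrite block_mxEur.
have e3 : \sum_(i<n) \sum_(j<n) X (rshift n i) (lshift n j) * Bm (rshift n i) (lshift n j)
   = \sum_i \sum_j X (lshift n i) (rshift n j) * C i j.
  rewrite exchange_big /=.
  by apply: eq_bigr => i _; apply: eq_bigr => j _; rewrite block_mxEdl mxE hs.
rewrite e1 e2 e3 e4 add0r addr0; ring.
Qed.

Lemma inner_Kbip n (X : 'M[R]_(n + n)) :
  (forall i j, X (rshift n j) (lshift n i) = X (lshift n i) (rshift n j)) ->
  inner X (Kbip R n) = 2 * \sum_i \sum_j X (lshift n i) (rshift n j).
Proof.
move=> hs; rewrite /Kbip.
transitivity (inner X (block_mx 0 (const_mx 1) (const_mx (1 : R))^T 0)).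
  by rewrite trmx_const.
rewrite inner_sym //.
by congr (_ * _); apply: eq_bigr => i _; apply: eq_bigr => j _; rewrite mxE mulr1.
Qed.


Lemma gram_unit k m (Q : 'M[R]_(k, m)) : row_free Q -> (Q *m Q^T) \in unitmx.
Proof.
move=> hf; rewrite -row_free_unit; apply: inj_row_free => v hv.
set u := v *m Q.
have h0 : (u *m u^T) 0 0 = 0.
  by rewrite /u trmx_mul !mulmxA -(mulmxA v) hv mul0mx mxE.
have hu : u = 0.
  clearbody u; move: h0; rewrite mxE => h0.
  have hp : forall x, true -> 0 <= u 0 x * u^T x 0.
    by move=> x _; rewrite mxE -expr2; exact: sqr_ge0.
  have h := psumr_eq0P hp h0.
  apply/matrixP => i j; rewrite (ord1 i) mxE.
  by have := h j isT; rewrite mxE -expr2 => /eqP; rewrite sqrf_eq0 => /eqP.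
by apply/eqP; rewrite -(mulmx_free_eq0 _ hf); apply/eqP.
Qed.


Lemma construct n k (B : 'M[R]_n) (L : 'M[R]_(n, k)) (Rb : 'M[R]_(k, n)) :
  L *m Rb = B -> row_free Rb -> exists (X : 'M[R]_(n + n)) (Y : 'I_n -> R),
 [/\ psd X, (forall a, X a a <= 1),
  (forall i j, X (lshift n i) (rshift n j)
     = (Num.sqrt (\sum_l B i l ^+ 2))^-1 * (Num.sqrt (Y j))^-1 * B i j),
  (forall i j, X (rshift n j) (lshift n i) = X (lshift n i) (rshift n j)) &
  [/\ (forall j, 0 <= Y j), \sum_j Y j = k%:R &
  (forall j, Y j = 0 -> forall i, B i j = 0)]].
Proof.
move=> LR hfree; set G := Rb *m Rb^T.
have Gs : G^T = G by rewrite /G trmx_mul trmxK.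
have Gpsd : psd G := psd_gram Rb.
have Gu : G \in unitmx := gram_unit hfree.
set S := invmx G.
have Spsd : psd S := psd_inv Gpsd Gu.
set W := col_mx (L *m G) Rb^T.
set P := W *m S *m W^T.
have Ppsd : psd P := psd_congr W Spsd.
have Pb : P = block_mx (L *m G *m S *m (L *m G)^T) (L *m G *m S *m Rb)
                       (Rb^T *m S *m (L *m G)^T) (Rb^T *m S *m Rb).
  by rewrite /P /W mul_col_mx tr_col_mx trmxK mul_col_row.
have GS : G *m S = 1%:M by rewrite /S mulmxV.
have Pur : forall i j, P (lshift n i) (rshift n j) = B i j.
  by move=> i j; rewrite Pb block_mxEur -(mulmxA L) GS mulmx1 LR.
have Pul : forall i, P (lshift n i) (lshift n i) = \sum_l B i l ^+ 2.
  have BBt : L *m G *m S *m (L *m G)^T = B *m B^T.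
    have -> : B *m B^T = (L *m Rb) *m (L *m Rb)^T by rewrite LR.
    by rewrite -(mulmxA L) GS mulmx1 trmx_mul Gs /G trmx_mul !mulmxA.
  move=> i; rewrite Pb block_mxEul BBt mxE.
  by apply: eq_bigr => l _; rewrite mxE expr2.
have Psym : forall a b, P b a = P a b.
  by move=> a b; have := congr1 (fun A : 'M[R]_(n + n) => A a b) Ppsd.1; rewrite mxE.
clearbody P.
set s := \row_a (Num.sqrt (P a a))^-1.
set X := diag_mx s *m P *m (diag_mx s)^T.
have Xe : forall a b, X a b = s 0 a * P a b * s 0 b.
  by move=> a b; rewrite /X tr_diag_mx mul_diag_mx mul_mx_diag !mxE.
set Y := fun j => P (rshift n j) (rshift n j).
exists X, Y; split.
- exact: psd_congr.
- move=> a; rewrite Xe /s mxE.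
  have := psd_diag a Ppsd; rewrite le0r => /orP [/eqP ->|hp].
    by rewrite mulr0 mul0r.
  by rewrite mulrC mulrA -expr2 exprVn sqr_sqrtr ?(ltW hp) // mulVf // gt_eqF.
- move=> i j; rewrite Xe Pur /s !mxE Pul; ring.
- by move=> i j; rewrite !Xe Psym; ring.
split.
- by move=> j; exact: psd_diag.
- rewrite /Y.
  transitivity (\tr (Rb^T *m S *m Rb)).
    by rewrite /mxtrace; apply: eq_bigr => j _; rewrite Pb block_mxEdr.
  by rewrite mxtrace_mulC mulmxA -/G GS mxtrace1.
- move=> j hY i; have := psd_cs (lshift n i) (rshift n j) Ppsd.
  rewrite -/(Y j) hY mulr0 Pur => h.
  by apply/eqP; rewrite -sqrf_eq0 eq_le h sqr_ge0.
Qed.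

End Helpers.

Section H2.
Variable R : realType.

Lemma term_lb (w Yv W y0 : R) : 0 <= w -> w <= W -> 0 <= Yv ->
  (Yv = 0 -> w = 0) -> 0 < y0 ->
  3 * w / (2 * y0) - W * Yv / (2 * y0 ^+ 3) <= w * (Num.sqrt Yv)^-1.
Proof.
move=> w0 wW Y0 hY y0p.
have [Yz|Ynz] := eqVneq Yv 0.
  by rewrite Yz (hY Yz) !mulr0 !mul0r subrr.
set y := Num.sqrt Yv.
have yp : 0 < y by rewrite sqrtr_gt0 lt_def Ynz Y0.
have Ye : Yv = y ^+ 2 by rewrite sqr_sqrtr.
rewrite Ye -subr_ge0.
have -> : w * y^-1 - (3 * w / (2 * y0) - W * y ^+ 2 / (2 * y0 ^+ 3))
   = (w * ((y - y0) ^+ 2 * (y + 2 * y0)) + (W - w) * y ^+ 3) / (2 * y * y0 ^+ 3).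
  by field; rewrite ?mulf_neq0 ?gt_eqF ?exprn_gt0 //.
apply: divr_ge0; last by rewrite !mulr_ge0 ?exprn_ge0 // ltW.
apply: addr_ge0; apply: mulr_ge0 => //.
- by apply: mulr_ge0; [exact: sqr_ge0 | lra].
- by rewrite subr_ge0.
- by rewrite exprn_ge0 // ltW.
Qed.

Lemma sum_ind (T : finType) (f : T -> R) : (forall j, f j = 0 \/ f j = 1) ->
  \sum_j f j = #|[set j : T | f j == 1]|%:R.
Proof.
move=> h01; rewrite cardsE -sum1_card natr_sum [RHS]big_mkcond /=.
apply: eq_bigr => j _; rewrite unfold_in /=; case: (h01 j) => ->.
- case: ifP => // h; exfalso.
  have h' : ((0:R) == 1) = true by exact: h.
  by move: h'; rewrite eq_sym oner_eq0.
- case: ifP => // h; exfalso.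
  have h' : ((1:R) == 1) = false by exact: h.
  by move: h'; rewrite eqxx.
Qed.


Lemma nnzE n (M : 'M[R]_n) : is01 M -> (nnz M)%:R = \sum_i \sum_j M i j.
Proof.
move=> h; rewrite pair_big /= sum_ind //; move=> [i j]; exact: h.
Qed.

Lemma rowdeg n (M : 'M[R]_n) i : is01 M -> \sum_j M i j <= (maxdeg M)%:R.
Proof.
move=> h; rewrite (@sum_ind _ (fun j => M i j)) ?ler_nat; last by move=> j; exact: h.
rewrite /maxdeg; apply: leq_trans (leq_maxl _ _).
exact: (@leq_bigmax _ (fun i => #|[set j : 'I_n | M i j == 1]|) i).
Qed.

Lemma coldeg n (M : 'M[R]_n) j : is01 M -> \sum_i M i j <= (maxdeg M)%:R.
Proof.
move=> h; rewrite (@sum_ind _ (fun i => M i j)) ?ler_nat; last by move=> i; exact: h.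
rewrite /maxdeg; apply: leq_trans (leq_maxr _ _).
exact: (@leq_bigmax _ (fun j => #|[set i : 'I_n | M i j == 1]|) j).
Qed.


Lemma rank_shift n (M : 'M[R]_n) (c : R) :
  (\rank (\matrix_(i, j) (M i j - c)%R : 'M[R]_n) <= \rank M + 1)%N.
Proof.
have -> : (\matrix_(i, j) (M i j - c) : 'M[R]_n)
   = M + (const_mx (- c) : 'cV[R]_n) *m (const_mx 1 : 'rV[R]_n).
  by apply/matrixP => i j; rewrite !mxE big_ord1 !mxE mulr1.
apply: leq_trans (mxrank_add _ _) _; rewrite leq_add2l.
exact: leq_trans (mxrankM_maxl _ _) (rank_leq_col _).
Qed.


Lemma sq_sum n (f : 'I_n -> R) (p : R) : (forall j, f j = 0 \/ f j = 1) ->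
  \sum_j (f j - p) ^+ 2 = (1 - 2 * p) * \sum_j f j + n%:R * p ^+ 2.
Proof.
move=> h.
have -> : \sum_j (f j - p) ^+ 2 = \sum_j ((1 - 2 * p) * f j + p ^+ 2).
  by apply: eq_bigr => j _; case: (h j) => ->; ring.
rewrite big_split /= -mulr_sumr sumr_const card_ord; congr (_ + _); by rewrite mulr_natl.
Qed.

Lemma term_le_sum n (F : 'I_n -> R) j : (forall l, 0 <= F l) -> F j <= \sum_l F l.
Proof.
move=> h; rewrite (bigD1 j) //= lerDl; apply: sumr_ge0 => l _; exact: h.
Qed.

End H2.

Theorem lemma3p3 (R : realType) (n r : nat) (M : 'M[R]_n) :
  (0 < r)%N -> is01 M -> (\rank M <= r)%N ->
  let d : R := (nnz M)%:R / n%:R in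
  d <= n%:R / 2 ->
  (maxdeg M)%:R <= (11 / 10) * d ->
  Num.sqrt d * Num.sqrt (n%:R ^+ 3) / (7 * Num.sqrt r%:R) <= pdisc M.
Proof.
move=> r0 h01 hrk d hd hD.
have [N0|Npos] := eqVneq (nnz M) 0%N.
  have -> : d = 0 by rewrite /d N0 mul0r.
  rewrite sqrtr0 !mul0r.
  have hz : psd (0 : 'M[R]_(n + n)).
    by split; [rewrite trmx0 | move=> v; rewrite mulmx0 mul0mx mxE].
  apply: le_trans (disc_le_pdisc M hz _); last by move=> i; rewrite mxE.
  by rewrite disc_eq big1 // => a _; rewrite big1 // => b _; rewrite mxE mul0r.
set NR : R := (nnz M)%:R.
have hN : NR = \sum_i \sum_j M i j by rewrite /NR nnzE.
have np : (0 < n)%N.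
  rewrite lt0n; apply/eqP => n0; move: Npos; rewrite -(eqr_nat R) -/NR hN.
  by rewrite big1 ?eqxx // => i _; exfalso; have := ltn_ord i; rewrite {2}n0.
set nR : R := n%:R.
have nRp : 0 < nR by rewrite ltr0n.
have NRp : 0 < NR by rewrite ltr0n lt0n.
set p : R := NR / nR ^+ 2.
have dE : d = NR / nR by [].
have pE : p = d / nR by rewrite /p dE expr2 invfM mulrA.
have dp : 0 < d by rewrite dE divr_gt0.
have p0 : 0 <= p by rewrite pE divr_ge0 // ltW.
have p12 : p <= 1 / 2.
  by rewrite pE ler_pdivrMr //; move: hd; rewrite -/nR; lra.
have ndp : nR * p ^+ 2 = d * p by rewrite pE; field; rewrite gt_eqF.
have NRd : NR = d * nR by rewrite dE mulfVK // gt_eqF.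
have nnp : nR * nR * p = NR by rewrite /p; field; rewrite gt_eqF.
set D : R := 11 / 10 * d.
have rowD : forall i, \sum_j M i j <= D.
  by move=> i; apply: le_trans (rowdeg i h01) hD.
have colD : forall j, \sum_i M i j <= D.
  by move=> j; apply: le_trans (coldeg j h01) hD.
set B : 'M[R]_n := \matrix_(i, j) (M i j - p).
have Be : forall i j, B i j = M i j - p by move=> i j; rewrite mxE.
have [X [Y [hX hX1 hXe hXs [hY0 hYs hYz]]]] :=
  construct (mulmx_base B) (row_base_free B).
apply: le_trans (disc_le_pdisc M hX hX1).
set s := fun i => (Num.sqrt (\sum_l B i l ^+ 2))^-1.
set t := fun j => (Num.sqrt (Y j))^-1.
have discE : disc M X = 2 * \sum_i \sum_j s i * t j * B i j ^+ 2.
  rewrite /disc /symmetrization inner_sym // inner_Kbip // -/p.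
  rewrite mulrCA -mulrBr; congr (2 * _).
  rewrite mulr_sumr -sumrB; apply: eq_bigr => i _.
  rewrite mulr_sumr -sumrB; apply: eq_bigr => j _.
  rewrite hXe /s /t; have hb := Be i j; move: hb; set b := B i j => hb.
  have -> : M i j = b + p by rewrite hb; ring.
  ring.
set rho := fun i => \sum_l B i l ^+ 2.
set w := fun j => \sum_i B i j ^+ 2.
have rhoE : forall i, rho i = (1 - 2 * p) * \sum_j M i j + nR * p ^+ 2.
  move=> i; rewrite -(@sq_sum R n (fun j => M i j) p (h01 i)) /rho.
  by apply: eq_bigr => l _; rewrite Be.
have wE : forall j, w j = (1 - 2 * p) * \sum_i M i j + nR * p ^+ 2.
  move=> j; rewrite -(@sq_sum R n (fun i => M i j) p (fun i => h01 i j)) /w.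
  by apply: eq_bigr => l _; rewrite Be.
have p2 : 0 <= 1 - 2 * p by lra.
have rhoD : forall i, rho i <= D.
  move=> i; rewrite rhoE ndp /D.
  have := ler_wpM2l p2 (rowD i); rewrite /D => h; nra.
have wD : forall j, w j <= D.
  move=> j; rewrite wE ndp /D.
  have := ler_wpM2l p2 (colD j); rewrite /D => h; nra.
have TE : \sum_j w j = NR * (1 - p).
  rewrite /w exchange_big /=.
  transitivity (\sum_i rho i) => //.
  rewrite (eq_bigr _ (fun i _ => rhoE i)) big_split /= -mulr_sumr -hN.
  rewrite sumr_const card_ord -mulr_natl -/nR -nnp; ring.
set a := Num.sqrt d; set m := Num.sqrt nR; set q := Num.sqrt (r%:R : R).
have ap : 0 < a by rewrite sqrtr_gt0.
have mp : 0 < m by rewrite sqrtr_gt0.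
have qp : 0 < q by rewrite sqrtr_gt0 ltr0n.
have aE : a ^+ 2 = d by rewrite sqr_sqrtr // ltW.
have mE : m ^+ 2 = nR by rewrite sqr_sqrtr // ltW.
have qE : q ^+ 2 = r%:R by rewrite sqr_sqrtr // ler0n.
have n3 : Num.sqrt (nR ^+ 3) = m ^+ 3.
  by rewrite -mE -exprM mulnC exprM sqrtr_sqr ger0_norm // exprn_ge0 // ltW.
rewrite n3.
set c := 11 / 10 * a.
have cp : 0 < c by rewrite /c; lra.
have hsB : forall i j, B i j ^+ 2 / c <= s i * B i j ^+ 2.
  move=> i j; have hle : B i j ^+ 2 <= rho i.
    by apply: (@term_le_sum R n (fun l => B i l ^+ 2)) => l; exact: sqr_ge0.
  have [rz|rnz] := eqVneq (rho i) 0.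
    have -> : B i j ^+ 2 = 0 by apply/eqP; rewrite eq_le sqr_ge0 andbT -rz.
    by rewrite mul0r mulr0.
  have rp : 0 < rho i by rewrite lt_def rnz (le_trans (sqr_ge0 _) hle).
  rewrite mulrC; apply: ler_wpM2r; first exact: sqr_ge0.
  rewrite /s -/(rho i) lef_pV2 ?posrE ?sqrtr_gt0 //.
  rewrite -(ger0_norm (ltW cp)) -sqrtr_sqr ler_sqrt ?sqr_ge0 //.
  apply: le_trans (rhoD i) _; rewrite /D /c -aE; nra.
have t0 : forall j, 0 <= t j by move=> j; rewrite /t invr_ge0 sqrtr_ge0.
have h1 : \sum_j t j * w j / c <= \sum_i \sum_j s i * t j * B i j ^+ 2.
  rewrite exchange_big /=; apply: ler_sum => j _.
  rewrite /w mulr_sumr mulr_suml; apply: ler_sum => i _.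
  have -> : s i * t j * B i j ^+ 2 = t j * (s i * B i j ^+ 2) by rewrite (mulrC (s i)) -mulrA.
  rewrite -mulrA; apply: ler_wpM2l => //.
set y0 : R := 3 * q / m.
have y0p : 0 < y0 by rewrite /y0 divr_gt0 // mulr_gt0.
have h2 : \sum_j (3 * w j / (2 * y0) - D * Y j / (2 * y0 ^+ 3)) <= \sum_j t j * w j.
  apply: ler_sum => j _; rewrite [t j * _]mulrC /t; apply: term_lb => //.
  - by apply: sumr_ge0 => i _; exact: sqr_ge0.
  - by move=> hy; rewrite /w big1 // => i _; rewrite (hYz j hy i) expr0n.
have h2e : \sum_j (3 * w j / (2 * y0) - D * Y j / (2 * y0 ^+ 3))
    = 3 * (NR * (1 - p)) / (2 * y0) - D * (\rank B)%:R / (2 * y0 ^+ 3).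
  rewrite sumrB -hYs -TE; congr (_ - _).
    by rewrite mulr_sumr mulr_suml.
  by rewrite mulr_sumr mulr_suml.
have rk : ((\rank B)%:R : R) <= 2 * q ^+ 2.
  rewrite qE; have := rank_shift M p; rewrite -/B => hk.
  have hk2 : (\rank B <= r + r)%N.
    by apply: (leq_trans hk); apply: leq_add.
  have : ((\rank B)%:R : R) <= (r + r)%:R by rewrite ler_nat.
  rewrite natrD; lra.
set U := \sum_j t j * w j.
have hU : \sum_j t j * w j / c = U / c by rewrite /U mulr_suml.
set k : R := (\rank B)%:R.
set V := 3 * (NR * (1 - p)) / (2 * y0) - D * k / (2 * y0 ^+ 3).
set V0 := 3 * (NR * (1 / 2)) / (2 * y0) - D * (2 * q ^+ 2) / (2 * y0 ^+ 3).
have Dp : 0 <= D by rewrite /D; lra.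
have V0V : V0 <= V.
  rewrite /V /V0; apply: lerB.
    apply: ler_wpM2r; first by rewrite invr_ge0 mulr_ge0 // ltW.
    apply: ler_wpM2l => //; apply: ler_wpM2l; [exact: ltW | lra].
  apply: ler_wpM2r; first by rewrite invr_ge0 mulr_ge0 // exprn_ge0 // ltW.
  by apply: ler_wpM2l.
have V0E : 2 * V0 / c = a * m ^+ 3 / q * (20 / 11 * (1 / 4 - 11 / 270)).
  rewrite /V0 NRd /D /c /y0 -aE -mE; field.
  by rewrite !gt_eqF.
have hUV : V <= U by rewrite /V -h2e.
rewrite discE.
have hq0 : q != 0 by rewrite gt_eqF.
apply: (@le_trans _ _ (2 * V0 / c)).
  have -> : a * m ^+ 3 / (7 * q) = a * m ^+ 3 / q * (1 / 7).
    by field; rewrite hq0.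
  rewrite V0E; apply: ler_wpM2l; last by lra.
  apply: divr_ge0; last exact: ltW.
  by apply: mulr_ge0; [exact: ltW | apply: exprn_ge0; exact: ltW].
rewrite -mulrA; apply: ler_wpM2l => //.
apply: (@le_trans _ _ (U / c)); last by rewrite -hU.
apply: ler_wpM2r; first by rewrite invr_ge0 ltW.
exact: le_trans V0V hUV.
Qed.
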